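(* Let $z:[0,\infty)\to C$ be a strong solution of the differential inclusion $\dot z(t)\in S(z(t))$ with $0\notin S(z(0))$. Then there exists $T>0$ such that $$\varphi(z(T))<\sup_{t\in[0,T]}\varphi(z(t))\le\varphi(z(0)).$$
   Context: $H$ is a real Hilbert space with inner product $\langle\cdot,\cdot\rangle$ and norm $\|\cdot\|$. $C\subset H$ is nonempty, bounded, convex and closed; $N_C(u)=\{z:\langle z,w-u\rangle\le0\ \forall w\in C\}$. On an open convex set $U\supset C$, $j\in C^{1,1}_L(U)$ (continuously Fréchet differentiable with $L$-Lipschitz gradient). $\eta:H\to\mathbb R$ is proper, convex, lower semicontinuous with $\mathrm{dom}(\eta)=H$, locally Lipschitz and bounded below on $C$, and there is $L_\eta:H\to\mathbb R$, bounded on bounded sets, with $L_\eta(u)\ge\sup_{z:\eta(z)\le\eta(u)}\frac{\eta(u)-\eta(z)}{\|u-z\|}$ for all $u$; $\partial\eta$ is its convex subdifferential. $\varphi:=j+\eta$ and $S(u):=-\nabla j(u)-\partial\eta(u)-N_C(u)$ for $u\in C$. A strong solution of $\dot z\in S(z)$ is a function $z\in C([0,\infty),H)$ that is absolutely continuous on every compact interval $[a,b]\subset(0,\infty)$ and satisfies $\dot z(t)\in S(z(t))$ for a.e. $t$. *)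

(* Defs.v *)
From Stdlib Require Import Reals List.
Open Scope R_scope.

Record HilbertSpace := {
  hcar :> Type;
  hzero : hcar;
  hadd : hcar -> hcar -> hcar;
  hopp : hcar -> hcar;
  hscal : R -> hcar -> hcar;
  hinner : hcar -> hcar -> R;
  hadd_assoc : forall x y z, hadd x (hadd y z) = hadd (hadd x y) z;
  hadd_comm : forall x y, hadd x y = hadd y x;
  hadd_zero : forall x, hadd x hzero = x;
  hadd_opp : forall x, hadd x (hopp x) = hzero;
  hscal_assoc : forall a b x, hscal a (hscal b x) = hscal (a * b) x;
  hscal_one : forall x, hscal 1 x = x;
  hscal_distr_R : forall a b x, hscal (a + b) x = hadd (hscal a x) (hscal b x);
  hscal_distr_H : forall a x y, hscal a (hadd x y) = hadd (hscal a x) (hscal a y);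
  hinner_sym : forall x y, hinner x y = hinner y x;
  hinner_add_l : forall x y z, hinner (hadd x y) z = hinner x z + hinner y z;
  hinner_scal_l : forall a x y, hinner (hscal a x) y = a * hinner x y;
  hinner_pos : forall x, 0 <= hinner x x;
  hinner_def : forall x, hinner x x = 0 -> x = hzero;
  hcomplete : forall u : nat -> hcar,
    (forall eps, eps > 0 -> exists N, forall m n, (m >= N)%nat -> (n >= N)%nat ->
        sqrt (hinner (hadd (u m) (hopp (u n))) (hadd (u m) (hopp (u n)))) < eps) ->
    exists l, forall eps, eps > 0 -> exists N, forall n, (n >= N)%nat ->
        sqrt (hinner (hadd (u n) (hopp l)) (hadd (u n) (hopp l))) < eps
}.

Arguments hzero {h}.
Arguments hadd {h}.
Arguments hopp {h}.
Arguments hscal {h}.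
Arguments hinner {h}.

Section Hdefs.
Variable H : HilbertSpace.

Definition hsub (x y : H) : H := hadd x (hopp y).
Definition hnorm (x : H) : R := sqrt (hinner x x).

Definition nonempty (C : H -> Prop) : Prop := exists x, C x.
Definition hbounded (C : H -> Prop) : Prop := exists M, forall x, C x -> hnorm x <= M.
Definition hconvex (C : H -> Prop) : Prop :=
  forall x y lam, C x -> C y -> 0 <= lam <= 1 ->
    C (hadd (hscal lam x) (hscal (1 - lam) y)).
Definition hopen (U : H -> Prop) : Prop :=
  forall x, U x -> exists r, r > 0 /\ forall y, hnorm (hsub y x) < r -> U y.
Definition hclosed (C : H -> Prop) : Prop := hopen (fun x => ~ C x).

Definition normal_cone (C : H -> Prop) (u z : H) : Prop :=
  forall w, C w -> hinner z (hsub w u) <= 0.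

(** g is the gradient of j on U (Fréchet derivative represented by g u via Riesz). *)
Definition is_gradient_on (U : H -> Prop) (j : H -> R) (g : H -> H) : Prop :=
  forall u, U u -> forall eps, eps > 0 -> exists delta, delta > 0 /\
    forall h, hnorm h < delta ->
      Rabs (j (hadd u h) - j u - hinner (g u) h) <= eps * hnorm h.

Definition lipschitz_on (U : H -> Prop) (L : R) (g : H -> H) : Prop :=
  forall x y, U x -> U y -> hnorm (hsub (g x) (g y)) <= L * hnorm (hsub x y).

Definition C11 (U : H -> Prop) (L : R) (j : H -> R) (gj : H -> H) : Prop :=
  is_gradient_on U j gj /\ lipschitz_on U L gj.

(** Properties of eta (real-valued, hence proper with dom = H) *)
Definition convex_fun (f : H -> R) : Prop :=
  forall x y lam, 0 <= lam <= 1 ->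
    f (hadd (hscal lam x) (hscal (1 - lam) y)) <= lam * f x + (1 - lam) * f y.
Definition lsc (f : H -> R) : Prop :=
  forall x eps, eps > 0 -> exists delta, delta > 0 /\
    forall y, hnorm (hsub y x) < delta -> f x - eps < f y.
Definition locally_lipschitz (f : H -> R) : Prop :=
  forall x, exists r K, r > 0 /\ forall y1 y2,
    hnorm (hsub y1 x) < r -> hnorm (hsub y2 x) < r ->
    Rabs (f y1 - f y2) <= K * hnorm (hsub y1 y2).
Definition bounded_below_on (C : H -> Prop) (f : H -> R) : Prop :=
  exists m, forall x, C x -> m <= f x.
Definition bounded_on_bounded (f : H -> R) : Prop :=
  forall B, hbounded B -> exists M, forall x, B x -> Rabs (f x) <= M.
Definition slope_bound (eta Leta : H -> R) : Prop :=
  forall u z, eta z <= eta u -> z <> u ->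
    (eta u - eta z) / hnorm (hsub u z) <= Leta u.

Definition subdiff (f : H -> R) (u g : H) : Prop :=
  forall w, f u + hinner g (hsub w u) <= f w.

Definition S_set (C : H -> Prop) (gj : H -> H) (eta : H -> R) (u v : H) : Prop :=
  exists g n, subdiff eta u g /\ normal_cone C u n /\
    v = hsub (hsub (hopp (gj u)) g) n.

Definition continuous_on_Rplus (z : R -> H) : Prop :=
  forall t, 0 <= t -> forall eps, eps > 0 -> exists delta, delta > 0 /\
    forall s, 0 <= s -> Rabs (s - t) < delta -> hnorm (hsub (z s) (z t)) < eps.

(** chain a <= a1 <= b1 <= a2 <= b2 <= ... <= b : a finite family of
    non-overlapping subintervals [ai,bi] of [a,b] *)
Fixpoint intervals_in (a b : R) (l : list (R * R)) : Prop :=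
  match l with
  | nil => a <= b
  | (ai, bi) :: l' => a <= ai /\ ai <= bi /\ intervals_in bi b l'
  end.

Definition abs_continuous_on (z : R -> H) (a b : R) : Prop :=
  forall eps, eps > 0 -> exists delta, delta > 0 /\
    forall l : list (R * R), intervals_in a b l ->
      fold_right (fun p acc => (snd p - fst p) + acc) 0 l < delta ->
      fold_right (fun p acc => hnorm (hsub (z (snd p)) (z (fst p))) + acc) 0 l < eps.

Definition has_derivative_at (z : R -> H) (t : R) (v : H) : Prop :=
  forall eps, eps > 0 -> exists delta, delta > 0 /\
    forall h, h <> 0 -> Rabs h < delta ->
      hnorm (hsub (hscal (/ h) (hsub (z (t + h)) (z t))) v) < eps.

End Hdefs.

Definition null_set (N : R -> Prop) : Prop :=
  forall eps, eps > 0 -> exists a b : nat -> R,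
    (forall n, a n <= b n) /\
    (forall n, sum_f_R0 (fun k => b k - a k) n <= eps) /\
    (forall t, N t -> exists n, a n < t < b n).

Arguments hsub {H}.
Arguments hnorm {H}.
Arguments hinner {h}.

Definition strong_solution (H : HilbertSpace) (C : H -> Prop) (gj : H -> H)
    (eta : H -> R) (z : R -> H) : Prop :=
  continuous_on_Rplus H z /\
  (forall t, 0 <= t -> C (z t)) /\
  (forall a b, 0 < a -> a <= b -> abs_continuous_on H z a b) /\
  null_set (fun t => 0 <= t /\
     ~ (exists v, has_derivative_at H z t v /\ S_set H C gj eta (z t) v)).

(* Main.v *)
Require Import Defs.
From Stdlib Require Import Reals.
Open Scope R_scope.
From Stdlib Require Import Lra Lia Psatz List Classical.


Lemma hadd_0l (H : HilbertSpace) (x : H) : hadd hzero x = x.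
Proof. rewrite hadd_comm; apply hadd_zero. Qed.

Lemma hadd_oppl (H : HilbertSpace) (x : H) : hadd (hopp x) x = hzero.
Proof. rewrite hadd_comm; apply hadd_opp. Qed.

Lemma hsub_chain (H : HilbertSpace) (a b c : H) :
  hsub a c = hadd (hsub a b) (hsub b c).
Proof.
  unfold hsub. rewrite <- (hadd_assoc H a).
  rewrite (hadd_assoc H (hopp b) b). rewrite hadd_oppl, hadd_0l. reflexivity.
Qed.

Lemma hsub_addK (H : HilbertSpace) (w v : H) : hadd (hsub w v) v = w.
Proof. unfold hsub. rewrite <- hadd_assoc, hadd_oppl, hadd_zero. reflexivity. Qed.

Lemma hadd_sub (H : HilbertSpace) (u x : H) : hadd u (hsub x u) = x.
Proof. unfold hsub. rewrite hadd_comm, <- hadd_assoc, hadd_oppl, hadd_zero; reflexivity. Qed.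

Lemma hsub_eq0 (H : HilbertSpace) (x y : H) : hsub x y = hzero -> x = y.
Proof.
  intro E. rewrite <- (hsub_addK H x y). rewrite E. apply hadd_0l.
Qed.

Lemma hself_eq0 (H : HilbertSpace) (y : H) : hadd y y = y -> y = hzero.
Proof.
  intro E. assert (E2 : hadd (hadd y y) (hopp y) = hadd y (hopp y)) by (rewrite E; reflexivity).
  rewrite <- hadd_assoc, hadd_opp, hadd_zero in E2. exact E2.
Qed.

Lemma hscal_0 (H : HilbertSpace) (w : H) : hscal 0 w = hzero.
Proof.
  apply hself_eq0. rewrite <- hscal_distr_R. f_equal; ring.
Qed.

Lemma hinner_0l (H : HilbertSpace) (y : H) : hinner hzero y = 0.
Proof.
  assert (E := hinner_add_l H hzero hzero y). rewrite hadd_zero in E. lra.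
Qed.

Lemma hinner_opp_l (H : HilbertSpace) (x y : H) : hinner (hopp x) y = - hinner x y.
Proof.
  assert (E := hinner_add_l H x (hopp x) y). rewrite hadd_opp, hinner_0l in E. lra.
Qed.

Lemma hinner_add_r (H : HilbertSpace) (x y z : H) : hinner x (hadd y z) = hinner x y + hinner x z.
Proof. rewrite !(hinner_sym H x). apply hinner_add_l. Qed.

Lemma hinner_scal_r (H : HilbertSpace) a (x y : H) : hinner x (hscal a y) = a * hinner x y.
Proof. rewrite !(hinner_sym H x). apply hinner_scal_l. Qed.

Lemma hinner_opp_r (H : HilbertSpace) (x y : H) : hinner x (hopp y) = - hinner x y.
Proof. rewrite !(hinner_sym H x). apply hinner_opp_l. Qed.

Lemma hinner_0r (H : HilbertSpace) (y : H) : hinner y hzero = 0.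
Proof. rewrite hinner_sym. apply hinner_0l. Qed.

Lemma hinner_sub_l (H : HilbertSpace) (x y z : H) : hinner (hsub x y) z = hinner x z - hinner y z.
Proof. unfold hsub. rewrite hinner_add_l, hinner_opp_l. ring. Qed.

Lemma hinner_sub_r (H : HilbertSpace) (x y z : H) : hinner z (hsub x y) = hinner z x - hinner z y.
Proof. unfold hsub. rewrite hinner_add_r, hinner_opp_r. ring. Qed.

Lemma hnorm_nonneg (H : HilbertSpace) (x : H) : 0 <= hnorm x.
Proof. apply sqrt_pos. Qed.

Lemma hnorm_sq (H : HilbertSpace) (x : H) : hnorm x * hnorm x = hinner x x.
Proof. unfold hnorm. apply sqrt_sqrt, hinner_pos. Qed.

Lemma hquad (H : HilbertSpace) (x y : H) t :
  hinner (hadd x (hscal t y)) (hadd x (hscal t y)) =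
  hinner x x + 2 * t * hinner x y + t * t * hinner y y.
Proof.
  rewrite !hinner_add_l, !hinner_add_r, !hinner_scal_l, !hinner_scal_r.
  rewrite (hinner_sym H y x). ring.
Qed.

Lemma hCS_sq (H : HilbertSpace) (x y : H) :
  hinner x y * hinner x y <= hinner x x * hinner y y.
Proof.
  assert (Px := hinner_pos H x). assert (Py := hinner_pos H y).
  destruct (Req_dec (hinner y y) 0) as [E|E].
  - destruct (Req_dec (hinner x y) 0) as [E2|E2].
    + rewrite E2, E. lra.
    + exfalso. set (t := - (hinner x x + 1) / (2 * hinner x y)).
      assert (Q := hinner_pos H (hadd x (hscal t y))). rewrite hquad, E in Q.
      assert (2 * t * hinner x y = - (hinner x x + 1)) by (unfold t; field; auto).
      lra.
  - set (t := - hinner x y / hinner y y).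
    assert (Q := hinner_pos H (hadd x (hscal t y))). rewrite hquad in Q.
    assert (Hy : 0 < hinner y y) by lra.
    assert (E2 : 2 * t * hinner x y + t * t * hinner y y = - (hinner x y * hinner x y) / hinner y y)
      by (unfold t; field; lra).
    assert (0 <= hinner x x - (hinner x y * hinner x y) / hinner y y) by lra.
    assert (0 <= (hinner x x - (hinner x y * hinner x y) / hinner y y) * hinner y y) by (apply Rmult_le_pos; lra).
    replace ((hinner x x - hinner x y * hinner x y / hinner y y) * hinner y y) with
       (hinner x x * hinner y y - hinner x y * hinner x y) in H1 by (field; lra).
    lra.
Qed.

Lemma hCS (H : HilbertSpace) (x y : H) : Rabs (hinner x y) <= hnorm x * hnorm y.
Proof.
  assert (A := hCS_sq H x y). rewrite <- !hnorm_sq in A.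
  assert (Nx := hnorm_nonneg H x). assert (Ny := hnorm_nonneg H y).
  apply Rsqr_incr_0_var.
  - unfold Rsqr. rewrite <- Rabs_mult. rewrite Rabs_right by (apply Rle_ge; nra). nra.
  - apply Rmult_le_pos; auto.
Qed.

Lemma hCS1 (H : HilbertSpace) (x y : H) : hinner x y <= hnorm x * hnorm y.
Proof. eapply Rle_trans; [apply Rle_abs | apply hCS]. Qed.

Lemma htri (H : HilbertSpace) (x y : H) : hnorm (hadd x y) <= hnorm x + hnorm y.
Proof.
  assert (Nx := hnorm_nonneg H x). assert (Ny := hnorm_nonneg H y).
  assert (Nz := hnorm_nonneg H (hadd x y)).
  apply Rsqr_incr_0_var; [|lra]. unfold Rsqr. rewrite hnorm_sq.
  rewrite !hinner_add_l, !hinner_add_r. rewrite (hinner_sym H y x).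
  assert (C1 := hCS1 H x y). rewrite <- !hnorm_sq. nra.
Qed.

Lemma hnorm_scal (H : HilbertSpace) a (x : H) : hnorm (hscal a x) = Rabs a * hnorm x.
Proof.
  unfold hnorm. rewrite hinner_scal_l, hinner_scal_r, <- Rmult_assoc.
  rewrite sqrt_mult_alt by (apply Rle_0_sqr). rewrite <- (sqrt_Rsqr_abs a). reflexivity.
Qed.

Lemma hnorm_sub_inner (H : HilbertSpace) (x y : H) :
  hinner (hsub x y) (hsub x y) = hinner x x - 2 * hinner x y + hinner y y.
Proof. rewrite !hinner_sub_l, !hinner_sub_r. rewrite (hinner_sym H y x). ring. Qed.

Lemma hnorm_sub_sym (H : HilbertSpace) (x y : H) : hnorm (hsub x y) = hnorm (hsub y x).
Proof. unfold hnorm. rewrite !hnorm_sub_inner. rewrite (hinner_sym H y x). f_equal; ring. Qed.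

Lemma hnorm_sub_tri (H : HilbertSpace) (a b c : H) :
  hnorm (hsub a c) <= hnorm (hsub a b) + hnorm (hsub b c).
Proof. rewrite (hsub_chain H a b c). apply htri. Qed.

Lemma hnorm_eq0 (H : HilbertSpace) (x : H) : hnorm x = 0 -> x = hzero.
Proof.
  intro E. apply hinner_def. rewrite <- hnorm_sq, E. ring.
Qed.

Lemma hnorm_sub_eq0 (H : HilbertSpace) (x y : H) : hnorm (hsub x y) = 0 -> x = y.
Proof. intro E. apply hsub_eq0, hnorm_eq0, E. Qed.

Lemma hnorm_sub_self (H : HilbertSpace) (x : H) : hnorm (hsub x x) = 0.
Proof. unfold hsub. rewrite hadd_opp. unfold hnorm. rewrite hinner_0l. apply sqrt_0. Qed.

Lemma hnorm_le_sub (H : HilbertSpace) (x y : H) : hnorm x <= hnorm (hsub x y) + hnorm y.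
Proof. rewrite <- (hsub_addK H x y) at 1. apply htri. Qed.

Lemma hnorm_sub_le (H : HilbertSpace) (x y : H) : hnorm (hsub x y) <= hnorm x + hnorm y.
Proof.
  unfold hsub. eapply Rle_trans; [apply htri|].
  assert (hnorm (hopp y) = hnorm y) as ->; [|lra].
  unfold hnorm. rewrite hinner_opp_l, hinner_opp_r. f_equal; ring.
Qed.


Definition ctsat (f : R -> R) x := forall e, e > 0 -> exists d, d > 0 /\
  forall y, Rabs (y - x) < d -> Rabs (f y - f x) < e.
Definition lenl (l : list (R * R)) := fold_right (fun p acc => (snd p - fst p) + acc) 0 l.
Definition incr (f : R -> R) (l : list (R * R)) :=
  fold_right (fun p acc => (f (snd p) - f (fst p)) + acc) 0 l.
Definition wsum (an bn : nat -> R) (F : list nat) :=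
  fold_right (fun n acc => (bn n - an n) + acc) 0 F.
Definition Kset (f : R -> R) a b y0 y1 x :=
  a <= x <= b /\ (forall t, a <= t <= x -> f t <= f x) /\ y0 <= f x <= y1.

Lemma ctsat_cpt f x : ctsat f x -> continuity_pt f x.
Proof.
  intros Hc. unfold continuity_pt, continue_in, limit1_in, limit_in. simpl.
  intros eps Heps. destruct (Hc eps Heps) as [d [Hd Hf]]. exists d. split; [lra|].
  intros y [_ Hy]. unfold R_dist in *. apply Hf. exact Hy.
Qed.

Lemma intervals_mono x y b l : intervals_in x b l -> y <= x -> intervals_in y b l.
Proof. destruct l as [|[p q] l]; simpl; intuition lra. Qed.

Lemma lastBelow f a b m : (forall t, a <= t <= b -> ctsat f t) -> f a <= m -> m < f b -> a <= b ->
  exists r, a <= r < b /\ f r = m /\ (forall t, a <= t <= r -> f t <= m) /\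
    (forall x, x <= b -> (forall t, a <= t <= x -> f t <= m) -> x <= r).
Proof.
  intros Hc Ha Hb Hab.
  set (E := fun x => a <= x <= b /\ forall t, a <= t <= x -> f t <= m).
  assert (Eb : bound E) by (exists b; intros x [Hx _]; lra).
  assert (Ea : exists x, E x) by (exists a; split; [lra| intros t Ht; replace t with a by lra; auto]).
  destruct (completeness E Eb Ea) as [r [Hub Hlub]].
  assert (ar : a <= r) by (apply Hub; destruct Ea; unfold E; split; [lra|intros t Ht; replace t with a by lra; auto]).
  assert (rb : r <= b) by (apply Hlub; intros x [Hx _]; lra).
  assert (below : forall t, a <= t < r -> f t <= m).
  { intros t Ht. destruct (classic (exists x, E x /\ t < x)) as [[x [[Hx1 Hx2] Htx]]|Hn].
    - apply Hx2; lra.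
    - exfalso. assert (r <= t); [|lra]. apply Hlub. intros x Ex.
      destruct (Rle_dec x t); auto. exfalso; apply Hn; exists x; split; auto; lra. }
  assert (fr_le : f r <= m).
  { destruct (Req_dec r a) as [->|Hra]; [auto|].
    destruct (Rle_dec (f r) m) as [|Hgt]; auto. exfalso.
    destruct (Hc r (conj ar rb) (f r - m)) as [d [Hd Hf]]; [lra|].
    set (t := Rmax a (r - d / 2)).
    assert (a <= t < r) by (unfold t; unfold Rmax; destruct Rle_dec; lra).
    assert (Rabs (t - r) < d) by (unfold t, Rmax; destruct Rle_dec; apply Rabs_def1; lra).
    specialize (Hf t H0). specialize (below t H). apply Rabs_def2 in Hf. lra. }
  assert (Er : forall t, a <= t <= r -> f t <= m).
  { intros t Ht. destruct (Req_dec t r) as [->|]; auto. apply below; lra. }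
  assert (rlt : r < b).
  { destruct (Req_dec r b) as [->|]; [|lra]. specialize (Er b). lra. }
  exists r. split; [lra|]. split.
  - destruct (Rle_dec m (f r)) as [|Hlt]; [lra|]. exfalso.
    destruct (Hc r (conj ar rb) (m - f r)) as [d [Hd Hf]]; [lra|].
    set (x := Rmin b (r + d / 2)).
    assert (r < x <= b) by (unfold x, Rmin; destruct Rle_dec; lra).
    assert (E x).
    { split; [lra|]. intros t Ht. destruct (Rle_dec t r); [apply Er; lra|].
      assert (Htr : Rabs (t - r) < d) by (apply Rabs_def1; unfold x, Rmin in *; destruct Rle_dec; lra).
      specialize (Hf t Htr). apply Rabs_def2 in Hf. lra. }
    specialize (Hub x H0). lra.
  - split; auto. intros x Hx Hx2. destruct (Rle_dec a x).
    + apply Hub. split; auto; lra.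
    + lra.
Qed.

Lemma wsum_remove an bn F n : (forall k, an k <= bn k) -> In n F ->
  (bn n - an n) + wsum an bn (remove Nat.eq_dec n F) <= wsum an bn F.
Proof.
  intros Hw. induction F as [|k F IH]; simpl; [tauto|]. intros [->|Hin].
  - destruct (Nat.eq_dec n n) as [_|]; [|congruence].
    assert (forall G, wsum an bn (remove Nat.eq_dec n G) <= wsum an bn G).
    { induction G as [|k' G IHG]; simpl; [lra|]. destruct (Nat.eq_dec n k'); simpl;
      specialize (Hw k'); lra. }
    specialize (H F). lra.
  - destruct (Nat.eq_dec n k) as [->|]; simpl.
    + assert (forall G, wsum an bn (remove Nat.eq_dec k G) <= wsum an bn G).
      { induction G as [|k' G IHG]; simpl; [lra|]. destruct (Nat.eq_dec k k'); simpl;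
        specialize (Hw k'); lra. }
      specialize (H F). specialize (Hw k). lra.
    + specialize (IH Hin). lra.
Qed.

Lemma wsum_nonneg an bn F : (forall k, an k <= bn k) -> 0 <= wsum an bn F.
Proof. intros Hw; induction F; simpl; [lra|]. specialize (Hw a); lra. Qed.

Lemma wsum_seq an bn M : wsum an bn (seq 0 (S M)) = sum_f_R0 (fun k => bn k - an k) M.
Proof.
  assert (G : forall F1 F2, wsum an bn (F1 ++ F2) = wsum an bn F1 + wsum an bn F2).
  { induction F1; intros; simpl; [lra|]. rewrite IHF1; lra. }
  induction M; [simpl; lra|]. rewrite seq_S, G, IHM. simpl. lra.
Qed.

Lemma chain f a b y0 y1 (an bn : nat -> R) :
  (forall n, an n <= bn n) -> (forall t, a <= t <= b -> ctsat f t) -> y1 <= f b ->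
  forall k F p, (length F < k)%nat -> Kset f a b y0 y1 p ->
  (forall t, Kset f a b y0 y1 t -> p <= t -> exists n, In n F /\ an n < t < bn n) ->
  exists l, intervals_in p b l /\ lenl l <= wsum an bn F /\ incr f l >= y1 - f p.
Proof.
  intros Hw Hc Hy1 k. induction k as [|k IH]; intros F p Hlen Kp Hcov; [lia|].
  destruct (Hcov p Kp (Rle_refl p)) as [n0 [Hin [Ha0 Hb0]]].
  destruct Kp as [[Hap Hpb] [Hmaxp [Hy0p Hy1p]]].
  set (c := Rmin (bn n0) b).
  assert (pc : p <= c) by (unfold c, Rmin; destruct Rle_dec; lra).
  assert (cb : c <= b) by (unfold c, Rmin; destruct Rle_dec; lra).
  assert (exists q, p <= q <= c /\ forall t, p <= t <= c -> f t <= f q) as [q [Hq Hqmax]].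
  { destruct (continuity_ab_maj f p c) as [q [Q1 Q2]]; auto.
    intros t Ht; apply ctsat_cpt, Hc; lra. exists q; auto. }
  set (m := f q).
  assert (Hall : forall t, a <= t <= c -> f t <= m).
  { intros t Ht. destruct (Rle_dec t p). - specialize (Hmaxp t ltac:(lra)). specialize (Hqmax p ltac:(lra)). unfold m; lra.
    - apply Hqmax; lra. }
  assert (Wn := wsum_remove an bn F n0 Hw Hin).
  assert (Wr := wsum_nonneg an bn (remove Nat.eq_dec n0 F) Hw).
  assert (lenq : q - p <= bn n0 - an n0) by (unfold c, Rmin in Hq; destruct Rle_dec; lra).
  destruct (Rle_dec y1 m) as [Hge|Hlt].
  - exists ((p, q) :: nil). simpl. split; [repeat split; lra|]. split; [lra|]. unfold m in Hge. lra.
  - apply Rnot_le_lt in Hlt.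
    assert (Hfa : f a <= m) by (apply Hall; lra).
    destruct (lastBelow f a b m Hc Hfa ltac:(lra) ltac:(lra)) as [r [Hr [Hfr [Hbel Hmaxr]]]].
    assert (cr : c <= r) by (apply Hmaxr; auto).
    assert (Kr : Kset f a b y0 y1 r).
    { split; [lra|]. split; [intros t Ht; rewrite Hfr; apply Hbel; auto|].
      specialize (Hqmax p ltac:(lra)). unfold m in *. lra. }
    assert (Hcov' : forall t, Kset f a b y0 y1 t -> r <= t -> exists n, In n (remove Nat.eq_dec n0 F) /\ an n < t < bn n).
    { intros t Kt Hrt. destruct (Hcov t Kt ltac:(lra)) as [n [Hn1 Hn2]]. exists n. split; auto.
      apply in_in_remove; auto. intros ->. unfold c, Rmin in cr; destruct Rle_dec; lra. }
    assert (Hlen' : (length (remove Nat.eq_dec n0 F) < k)%nat).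
    { assert (T := remove_length_lt Nat.eq_dec F n0 Hin). lia. }
    destruct (IH _ r Hlen' Kr Hcov') as [l [Hl1 [Hl2 Hl3]]].
    exists ((p, q) :: l). simpl. split.
    + repeat split; try lra. apply intervals_mono with r; auto; lra.
    + split; [lra|]. unfold m in *. lra.
Qed.


Lemma K_open f a b y0 y1 s : a <= s <= b -> ctsat f s -> ~ Kset f a b y0 y1 s ->
  exists rho, rho > 0 /\ forall t, Rabs (t - s) < rho -> ~ Kset f a b y0 y1 t.
Proof.
  intros Hs Hc Hn.
  destruct (classic (forall t, a <= t <= s -> f t <= f s)) as [Hall|Hex].
  - destruct (Rle_dec y0 (f s)) as [H0|H0].
    + destruct (Rle_dec (f s) y1) as [H1|H1].
      * exfalso; apply Hn; repeat split; auto; lra.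
      * destruct (Hc (f s - y1)) as [d [Hd Hf]]; [lra|]. exists d; split; auto.
        intros t Ht [_ [_ Kt]]. specialize (Hf t Ht). apply Rabs_def2 in Hf. lra.
    + destruct (Hc (y0 - f s)) as [d [Hd Hf]]; [lra|]. exists d; split; auto.
      intros t Ht [_ [_ Kt]]. specialize (Hf t Ht). apply Rabs_def2 in Hf. lra.
  - apply not_all_ex_not in Hex. destruct Hex as [t0 Ht0].
    apply imply_to_and in Ht0. destruct Ht0 as [Ht0 Hgt]. apply Rnot_le_lt in Hgt.
    assert (t0 < s) by (destruct (Req_dec t0 s) as [->|]; lra).
    destruct (Hc (f t0 - f s)) as [d [Hd Hf]]; [lra|].
    exists (Rmin d (s - t0)). split; [apply Rmin_pos; lra|].
    intros t Ht [_ [Kt _]].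
    assert (Rabs (t - s) < d) by (eapply Rlt_le_trans; [exact Ht| apply Rmin_l]).
    assert (Rabs (t - s) < s - t0) by (eapply Rlt_le_trans; [exact Ht| apply Rmin_r]).
    apply Rabs_def2 in H1. specialize (Hf t H0). apply Rabs_def2 in Hf.
    specialize (Kt t0 ltac:(lra)). lra.
Qed.

Lemma finite_cover f a b y0 y1 (an bn : nat -> R) : a <= b ->
  (forall t, a <= t <= b -> ctsat f t) ->
  (forall x, Kset f a b y0 y1 x -> exists n, an n < x < bn n) ->
  exists M, forall t, Kset f a b y0 y1 t -> exists n, (n <= M)%nat /\ an n < t < bn n.
Proof.
  intros Hab Hc Hcov.
  set (P := fun x => exists M, forall t, Kset f a b y0 y1 t -> t <= x -> exists n, (n <= M)%nat /\ an n < t < bn n).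
  set (E := fun x => a <= x <= b /\ P x).
  assert (Ea : E a).
  { split; [lra|]. destruct (classic (Kset f a b y0 y1 a)) as [Ka|Ka].
    - destruct (Hcov a Ka) as [n Hn]. exists n. intros t Kt Hta.
      assert (t = a) by (destruct Kt as [[? ?] _]; lra). subst t. exists n; split; auto.
    - exists 0%nat. intros t Kt Hta. assert (t = a) by (destruct Kt as [[? ?] _]; lra). subst t. tauto. }
  assert (Eb : bound E) by (exists b; intros x [Hx _]; lra).
  destruct (completeness E Eb (ex_intro _ a Ea)) as [s [Hub Hlub]].
  assert (Has : a <= s) by (apply Hub; auto).
  assert (sb : s <= b) by (apply Hlub; intros x [Hx _]; lra).
  assert (near : forall rho, rho > 0 -> exists x, E x /\ s - rho < x).
  { intros rho Hr. destruct (classic (exists x, E x /\ s - rho < x)) as [|Hn]; auto.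
    exfalso. assert (s <= s - rho); [|lra]. apply Hlub. intros x Ex.
    destruct (Rle_dec x (s - rho)); auto. exfalso; apply Hn; exists x; split; auto; lra. }
  assert (ext : exists x', E x' /\ (s < x' \/ x' = b)).
  { destruct (classic (Kset f a b y0 y1 s)) as [Ks|Ks].
    - destruct (Hcov s Ks) as [n0 [Hn1 Hn2]].
      destruct (near (s - an n0)) as [x [[Hx1 [M HM]] Hx2]]; [lra|].
      assert (xs : x <= s) by (apply Hub; split; [lra| exists M; auto]).
      set (x' := Rmin b ((s + bn n0) / 2)).
      exists x'. split.
      + split; [unfold x', Rmin; destruct Rle_dec; lra|].
        exists (Nat.max M n0). intros t Kt Ht.
        destruct (Rle_dec t x) as [Htx|Htx].
        * destruct (HM t Kt Htx) as [n [Hn Hn']]. exists n; split; auto; lia.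
        * exists n0. split; [lia|]. unfold x', Rmin in Ht; destruct Rle_dec; lra.
      + unfold x', Rmin; destruct Rle_dec; [right; auto|left; lra].
    - destruct (K_open f a b y0 y1 s ltac:(lra) (Hc s ltac:(lra)) Ks) as [rho [Hr Hrho]].
      destruct (near rho Hr) as [x [[Hx1 [M HM]] Hx2]].
      assert (xs : x <= s) by (apply Hub; split; [lra| exists M; auto]).
      set (x' := Rmin b (s + rho / 2)).
      exists x'. split.
      + split; [unfold x', Rmin; destruct Rle_dec; lra|].
        exists M. intros t Kt Ht.
        destruct (Rle_dec t x) as [Htx|Htx]; [apply HM; auto|].
        exfalso. apply (Hrho t); auto. apply Rabs_def1; unfold x', Rmin in Ht; destruct Rle_dec; lra.
      + unfold x', Rmin; destruct Rle_dec; [right; auto|left; lra]. }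
  destruct ext as [x' [[Hx'1 [M HM]] Hx'2]].
  assert (x' <= s) by (apply Hub; split; [auto| exists M; auto]).
  destruct Hx'2 as [Hlt | Heq]; [lra| subst x'].  
  exists M. intros t Kt. apply HM; auto. destruct Kt as [[? ?] _]; auto.
Qed.

Lemma mono (f : R -> R) (N : R -> Prop) a b : a < b ->
  (forall t, a <= t <= b -> ctsat f t) -> null_set N ->
  (forall t, a < t <= b -> ~ N t -> exists d, d > 0 /\ forall h, 0 < h < d -> f t < f (t - h)) ->
  (forall e, e > 0 -> exists d, d > 0 /\ forall l, intervals_in a b l -> lenl l < d -> incr f l < e) ->
  f b <= f a.
Proof.
  intros Hab Hc Hnull Hgood Hac.
  destruct (Rle_dec (f b) (f a)) as [|Hgt]; auto. exfalso. apply Rnot_le_lt in Hgt.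
  set (D := f b - f a).
  set (y0 := f a + D / 3). set (y1 := f b).
  destruct (Hac (D / 3)) as [del [Hdel Hacd]]; [unfold D; lra|].
  destruct (Hnull (del / 2)) as [an [bn [Hw [Hsum HcovN]]]]; [lra|].
  assert (KN : forall x, Kset f a b y0 y1 x -> N x).
  { intros x [[Hax Hxb] [Hmx [Hy0 Hy1]]]. apply NNPP. intro Hn.
    assert (a < x) by (destruct (Req_dec a x) as [<-|]; [unfold y0, D in Hy0; lra|lra]).
    destruct (Hgood x ltac:(lra) Hn) as [d [Hd Hl]].
    set (h := Rmin d (x - a) / 2).
    assert (0 < h < d) by (unfold h, Rmin; destruct Rle_dec; lra).
    assert (a <= x - h <= x) by (unfold h, Rmin; destruct Rle_dec; lra).
    specialize (Hl h H0). specialize (Hmx (x - h) H1). lra. }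
  assert (Kcov : forall x, Kset f a b y0 y1 x -> exists n, an n < x < bn n) by (intros; apply HcovN, KN; auto).
  destruct (finite_cover f a b y0 y1 an bn ltac:(lra) Hc Kcov) as [M HM].
  destruct (lastBelow f a b y0 Hc ltac:(unfold y0, D; lra) ltac:(unfold y0, D; lra) ltac:(lra))
    as [p0 [Hp0 [Hfp0 [Hbel _]]]].
  assert (Kp0 : Kset f a b y0 y1 p0).
  { split; [lra|]. split; [intros; rewrite Hfp0; auto| unfold y1, y0, D in *; lra]. }
  destruct (chain f a b y0 y1 an bn Hw Hc (Rle_refl _) (S (length (seq 0 (S M)))) (seq 0 (S M)) p0
     ltac:(lia) Kp0) as [l [Hl1 [Hl2 Hl3]]].
  { intros t Kt _. destruct (HM t Kt) as [n [Hn1 Hn2]]. exists n. split; auto.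
    apply in_seq. lia. }
  rewrite wsum_seq in Hl2. specialize (Hsum M).
  assert (Hi := Hacd l (intervals_mono p0 a b l Hl1 ltac:(lra)) ltac:(lra)).
  unfold y1, y0, D in *. lra.
Qed.


Lemma rabs_le2 x M : Rabs x <= M -> - M <= x <= M.
Proof. intros Hx. split; [rewrite <- Rabs_Ropp in Hx|]; pose proof (Rle_abs (- x)); pose proof (Rle_abs x); lra. Qed.

Lemma inner_comb (H : HilbertSpace) (u w : H) s1 s2 :
  hinner (hadd (hscal s1 u) (hscal (1 - s1) w)) (hadd (hscal s2 u) (hscal (1 - s2) w)) =
  s1 * s2 * hinner u u + (s1 * (1 - s2) + (1 - s1) * s2) * hinner u w + (1 - s1) * (1 - s2) * hinner w w.
Proof.
  rewrite !hinner_add_l, !hinner_add_r, !hinner_scal_l, !hinner_scal_r.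
  rewrite (hinner_sym H w u). ring.
Qed.

Lemma inner_comb1 (H : HilbertSpace) (g u w : H) s :
  hinner g (hadd (hscal s u) (hscal (1 - s) w)) = s * hinner g u + (1 - s) * hinner g w.
Proof. rewrite hinner_add_r, !hinner_scal_r. ring. Qed.

Lemma j_lip (H : HilbertSpace) (U C : H -> Prop) (j : H -> R) (gj : H -> H)
  (hgrad : is_gradient_on H U j gj) (hCU : forall x, C x -> U x) (hCc : hconvex H C) G
  (hG : forall x, C x -> hnorm (gj x) <= G) :
  forall u w, C u -> C w -> Rabs (j u - j w) <= G * hnorm (hsub u w).
Proof.
  intros u w Cu Cw.
  set (x := fun s => hadd (hscal s u) (hscal (1 - s) w)).
  set (nd := hnorm (hsub u w)).
  assert (Hnd : 0 <= nd) by apply hnorm_nonneg.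
  set (phi := fun s => j (x s)).
  set (phi' := fun s => hinner (gj (x s)) (hsub u w)).
  assert (Hd : forall s, 0 <= s <= 1 -> derivable_pt_lim phi s (phi' s)).
  { intros s Hs eps Heps.
    assert (Cx : C (x s)) by (apply hCc; auto).
    set (e1 := eps / (2 * (nd + 1))).
    destruct (hgrad (x s) (hCU _ Cx) e1) as [dG [HdG Hg]]; [unfold e1; apply Rdiv_lt_0_compat; lra|].
    assert (Hdp : 0 < dG / (nd + 1)) by (apply Rdiv_lt_0_compat; lra).
    exists (mkposreal _ Hdp). simpl. intros h Hh0 Hh.
    set (k := hsub (x (s + h)) (x s)).
    assert (Ek : hadd (x s) k = x (s + h)) by apply hadd_sub.
    assert (Nk : hnorm k = Rabs h * nd).
    { unfold k, hnorm. rewrite hnorm_sub_inner. unfold x. rewrite !inner_comb.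
      unfold nd, hnorm. rewrite hnorm_sub_inner.
      rewrite <- (sqrt_Rsqr_abs h). rewrite <- sqrt_mult_alt by apply Rle_0_sqr.
      f_equal. unfold Rsqr. ring. }
    assert (Ik : hinner (gj (x s)) k = h * phi' s).
    { unfold k, phi'. rewrite !hinner_sub_r. unfold x. rewrite !inner_comb1. ring. }
    assert (Hkd : hnorm k < dG).
    { rewrite Nk. destruct (Req_dec nd 0) as [E|E]. rewrite E; lra.
      apply Rlt_le_trans with (dG / (nd + 1) * nd).
      apply Rmult_lt_compat_r; lra.
      unfold Rdiv. rewrite Rmult_assoc. rewrite <- (Rmult_1_r dG) at 2. apply Rmult_le_compat_l; [lra|].
      apply Rmult_le_reg_l with (nd + 1); [lra|]. field_simplify; lra. }
    specialize (Hg k Hkd). rewrite Ek, Ik in Hg. fold (phi (s + h)) (phi s) in Hg.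
    assert (Hah : 0 < Rabs h) by (apply Rabs_pos_lt; auto).
    replace ((phi (s + h) - phi s) / h - phi' s) with ((phi (s + h) - phi s - h * phi' s) / h) by (field; auto).
    unfold Rdiv. rewrite Rabs_mult, Rabs_inv.
    apply Rle_lt_trans with (e1 * nd).
    { apply Rmult_le_reg_r with (Rabs h); [lra|]. rewrite Rmult_assoc, Rinv_l by lra.
      rewrite Nk in Hg. nra. }
    unfold e1. replace (eps / (2 * (nd + 1)) * nd) with (eps * (nd / (2 * (nd + 1)))) by (field; lra).
    rewrite <- (Rmult_1_r eps) at 2. apply Rmult_lt_compat_l; auto.
    apply Rmult_lt_reg_r with (2 * (nd + 1)); [lra|]. unfold Rdiv. rewrite Rmult_assoc, Rinv_l; lra. }
  destruct (MVT_cor2 phi phi' 0 1 ltac:(lra) Hd) as [c [Hc1 Hc2]].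
  assert (X1 : x 1 = u) by (unfold x; replace (1 - 1) with 0 by ring; rewrite hscal_0, hscal_one, hadd_zero; auto).
  assert (X0 : x 0 = w) by (unfold x; replace (1 - 0) with 1 by ring; rewrite hscal_0, hscal_one, hadd_0l; auto).
  unfold phi in Hc1. rewrite X1, X0 in Hc1. rewrite Hc1. replace (1 - 0) with 1 by ring. rewrite Rmult_1_r.
  unfold phi'. eapply Rle_trans; [apply hCS|].
  apply Rmult_le_compat_r; auto. apply hG. apply hCc; auto; lra.
Qed.

Lemma eta_lip (H : HilbertSpace) (C : H -> Prop) (eta Leta : H -> R)
  (hL : slope_bound H eta Leta) Me (hMe : forall x, C x -> Rabs (Leta x) <= Me) :
  forall u w, C u -> C w -> Rabs (eta u - eta w) <= Me * hnorm (hsub u w).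
Proof.
  assert (one : forall u w, C u -> C w -> eta u - eta w <= Me * hnorm (hsub u w)).
  { intros u w Cu Cw. assert (Me0 : 0 <= Me) by (specialize (hMe u Cu); pose proof (Rabs_pos (Leta u)); lra).
    assert (N0 := hnorm_nonneg H (hsub u w)).
    destruct (Rle_dec (eta w) (eta u)) as [Hle|Hlt]; [| apply Rnot_le_lt in Hlt; assert (0 <= Me * hnorm (hsub u w)) by (apply Rmult_le_pos; auto); lra].
    destruct (classic (w = u)) as [Heq|Hne]; [subst w; rewrite hnorm_sub_self; lra|].
    assert (Np : 0 < hnorm (hsub u w)).
    { destruct N0 as [|E]; auto. exfalso. apply Hne. symmetry. apply hnorm_sub_eq0. auto. }
    specialize (hL u w Hle Hne). specialize (hMe u Cu). apply rabs_le2 in hMe.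
    assert ((eta u - eta w) / hnorm (hsub u w) <= Me) by lra.
    apply Rmult_le_reg_r with (/ hnorm (hsub u w)). apply Rinv_0_lt_compat; auto.
    rewrite Rmult_assoc, Rinv_r by lra. lra. }
  intros u w Cu Cw. apply Rabs_le. split.
  - specialize (one w u Cw Cu). rewrite hnorm_sub_sym in one. lra.
  - apply one; auto.
Qed.


Lemma descent (H : HilbertSpace) (C U : H -> Prop) (j : H -> R) (gj : H -> H) (eta : H -> R)
  (hgrad : is_gradient_on H U j gj) (hCU : forall x, C x -> U x) (z : R -> H)
  (hcont : continuous_on_Rplus H z) (hzC : forall t, 0 <= t -> C (z t)) t v :
  0 < t -> has_derivative_at H z t v -> S_set H C gj eta (z t) v ->
  forall e, e > 0 -> exists d, d > 0 /\ forall h, 0 < h < d ->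
    (j (z t) + eta (z t)) - (j (z (t - h)) + eta (z (t - h))) <= h * (- (hnorm v * hnorm v) + e) /\
    hnorm (hsub (z t) (z (t - h))) <= h * (hnorm v + e).
Proof.
  intros Ht Hder [g [n [Hsub [Hnc Hv]]]] e He.
  set (u := z t). set (nv := hnorm v).
  assert (Nv : 0 <= nv) by apply hnorm_nonneg.
  set (e2 := Rmin 1 (e / (2 * (nv + 1)))).
  set (e1 := e / (2 * (nv + 2))).
  assert (He2 : 0 < e2) by (unfold e2; apply Rmin_pos; [lra| apply Rdiv_lt_0_compat; lra]).
  assert (He2a : e2 <= 1) by apply Rmin_l.
  assert (He2b : e2 * (2 * (nv + 1)) <= e).
  { assert (e2 <= e / (2 * (nv + 1))) by apply Rmin_r.
    apply Rmult_le_compat_r with (r := 2 * (nv + 1)) in H0; [|lra].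
    unfold Rdiv in H0. rewrite Rmult_assoc, Rinv_l in H0; lra. }
  assert (He1 : 0 < e1) by (unfold e1; apply Rdiv_lt_0_compat; lra).
  assert (He1b : e1 * (2 * (nv + 2)) = e) by (unfold e1; field; lra).
  destruct (Hder e2 He2) as [dD [HdD HD]].
  destruct (hgrad u (hCU _ (hzC t ltac:(lra))) e1 He1) as [dG [HdG HG]].
  destruct (hcont t ltac:(lra) dG HdG) as [dC [HdC HC]].
  exists (Rmin dD (Rmin dC t)).
  split; [apply Rmin_pos; [lra| apply Rmin_pos; lra]|].
  intros h Hh.
  assert (hD : h < dD) by (eapply Rlt_le_trans; [apply Hh| apply Rmin_l]).
  assert (hC : h < dC) by (eapply Rlt_le_trans; [apply Hh| eapply Rle_trans; [apply Rmin_r| apply Rmin_l]]).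
  assert (ht : h < t) by (eapply Rlt_le_trans; [apply Hh| eapply Rle_trans; [apply Rmin_r| apply Rmin_r]]).
  set (X := z (t - h)).
  assert (CX : C X) by (apply hzC; lra).
  set (k := hsub X u).
  specialize (HD (- h) ltac:(lra) ltac:(rewrite Rabs_Ropp, Rabs_right; lra)).
  replace (t + - h) with (t - h) in HD by ring. fold X u k in HD.
  set (w := hscal (/ - h) k) in HD. set (ee := hsub w v) in HD.
  assert (Nw : hnorm w = / h * hnorm k).
  { unfold w. rewrite hnorm_scal. rewrite Rabs_inv by lra. rewrite Rabs_Ropp, Rabs_right by lra. auto. }
  assert (Nk : hnorm k = h * hnorm w) by (rewrite Nw; field; lra).
  assert (Nw2 : hnorm w <= hnorm ee + nv) by apply hnorm_le_sub.
  assert (Ivw : hinner v w = / - h * (hinner v X - hinner v u)).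
  { unfold w, k. rewrite hinner_scal_r, hinner_sub_r. auto. }
  assert (Ive : hinner v ee = hinner v w - nv * nv) by (unfold ee; rewrite hinner_sub_r; unfold nv; rewrite hnorm_sq; auto).
  assert (CSe : Rabs (hinner v ee) <= nv * hnorm ee) by apply hCS.
  apply rabs_le2 in CSe.
  assert (Nee := hnorm_nonneg H ee).
  set (A := hinner v u - hinner v X).
  assert (EA : A = h * hinner v w) by (unfold A; rewrite Ivw; field; lra).
  assert (HA : A >= h * (nv * nv - nv * e2)).
  { rewrite EA. apply Rle_ge. apply Rmult_le_compat_l; [lra|].
    assert (nv * hnorm ee <= nv * e2) by (apply Rmult_le_compat_l; lra). lra. }
  assert (Hkc : hnorm k < dG).
  { unfold k, X, u. apply HC; [lra| rewrite Rabs_left; lra]. }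
  specialize (HG k Hkc). unfold k in HG at 1. rewrite hadd_sub in HG.
  unfold k in HG. rewrite hinner_sub_r in HG. fold k in HG. apply rabs_le2 in HG.
  specialize (Hsub X). rewrite hinner_sub_r in Hsub.
  specialize (Hnc X CX). rewrite hinner_sub_r in Hnc. fold u in Hsub. fold u in Hnc.
  assert (Hvi : forall y, hinner v y = - hinner (gj u) y - hinner g y - hinner n y).
  { intro y. rewrite Hv. rewrite !hinner_sub_l, hinner_opp_l. reflexivity. }
  assert (A2 : A = - (hinner (gj u) u - hinner (gj u) X) - (hinner g u - hinner g X) - (hinner n u - hinner n X)).
  { unfold A. rewrite !Hvi. ring. }
  assert (NwB : hnorm w <= e2 + nv) by lra.
  assert (NkB : hnorm k <= h * (e2 + nv)) by (rewrite Nk; apply Rmult_le_compat_l; lra).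
  split.
  - fold u X.
    assert (T1 : e1 * hnorm k <= e1 * (h * (e2 + nv))) by (apply Rmult_le_compat_l; lra).
    assert (S1 : nv * e2 <= e / 2).
    { assert (nv * e2 <= (nv + 1) * e2) by nra. lra. }
    assert (S2 : e1 * (e2 + nv) <= e / 2).
    { assert (e1 * e2 <= e1 * 1) by (apply Rmult_le_compat_l; lra). lra. }
    assert (T2 : h * (nv * e2) + e1 * (h * (e2 + nv)) <= h * e).
    { replace (h * (nv * e2) + e1 * (h * (e2 + nv))) with (h * (nv * e2 + e1 * (e2 + nv))) by ring.
      apply Rmult_le_compat_l; lra. }
    assert (Hsub2 : eta u - eta X <= hinner g u - hinner g X) by lra.
    assert (A3 : - A <= - (h * (nv * nv)) + h * (nv * e2)).
    { replace (- (h * (nv * nv)) + h * (nv * e2)) with (- (h * (nv * nv - nv * e2))) by ring. lra. }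
    replace (h * (- (nv * nv) + e)) with (- (h * (nv * nv)) + h * e) by ring.
    nra.
  - rewrite hnorm_sub_sym. fold u X k.
    assert (h * (e2 + nv) <= h * (nv + e)); [|lra].
    apply Rmult_le_compat_l; [lra|]. nra.
Qed.


Definition zsum (H : HilbertSpace) (z : R -> H) (l : list (R * R)) :=
  fold_right (fun p acc => hnorm (hsub (z (snd p)) (z (fst p))) + acc) 0 l.

Lemma intervals_le x b l : intervals_in x b l -> x <= b.
Proof.
  revert x. induction l as [|[p q] l IH]; simpl; [auto|]. intros x [H1 [H2 H3]].
  specialize (IH q H3). lra.
Qed.

Lemma zsum_nonneg (H : HilbertSpace) z l : 0 <= zsum H z l.
Proof. induction l; simpl; [lra|]. pose proof (hnorm_nonneg H (hsub (z (snd a)) (z (fst a)))). lra. Qed.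

Lemma incr_le (H : HilbertSpace) (F : R -> R) (z : R -> H) K a b : 0 <= K ->
  (forall p q, a <= p -> p <= q -> q <= b -> F q - F p <= K * hnorm (hsub (z q) (z p))) ->
  forall l a', a <= a' -> intervals_in a' b l -> incr F l <= K * zsum H z l.
Proof.
  intros HK Hlip l. induction l as [|[p q] l IH]; intros a' Ha' Hl; simpl; [lra|].
  simpl in Hl. destruct Hl as [H1 [H2 H3]].
  assert (Hqb : q <= b) by (apply intervals_le with l; auto).
  specialize (IH q ltac:(lra) H3). specialize (Hlip p q ltac:(lra) H2 Hqb). unfold incr, zsum in *. lra.
Qed.

Lemma AC_incr (H : HilbertSpace) (F : R -> R) (z : R -> H) K a b : 0 <= K ->
  abs_continuous_on H z a b ->
  (forall p q, a <= p -> p <= q -> q <= b -> F q - F p <= K * hnorm (hsub (z q) (z p))) ->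
  forall e, e > 0 -> exists d, d > 0 /\ forall l, intervals_in a b l -> lenl l < d -> incr F l < e.
Proof.
  intros HK Hac Hlip e He.
  destruct (Hac (e / (K + 1))) as [d [Hd Hd2]]; [apply Rdiv_lt_0_compat; lra|].
  exists d. split; auto. intros l Hl Hlen.
  specialize (Hd2 l Hl Hlen). fold (zsum H z l) in Hd2.
  assert (I := incr_le H F z K a b HK Hlip l a (Rle_refl a) Hl).
  assert (Z := zsum_nonneg H z l).
  assert (zsum H z l * (K + 1) < e).
  { apply Rmult_lt_compat_r with (r := K + 1) in Hd2; [|lra].
    unfold Rdiv in Hd2. rewrite Rmult_assoc, Rinv_l in Hd2; lra. }
  nra.
Qed.

Lemma rev_tri (H : HilbertSpace) (x y c : H) :
  Rabs (hnorm (hsub x c) - hnorm (hsub y c)) <= hnorm (hsub x y).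
Proof.
  apply Rabs_le. assert (T1 := hnorm_sub_tri H x y c). assert (T2 := hnorm_sub_tri H y x c).
  rewrite (hnorm_sub_sym H y x) in T2. lra.
Qed.

Lemma Gmono (H : HilbertSpace) (C U : H -> Prop) (j : H -> R) (gj : H -> H) (eta : H -> R)
  (hgrad : is_gradient_on H U j gj) (hCU : forall x, C x -> U x) (z : R -> H)
  (hz : strong_solution H C gj eta z) Kp (hKp : 0 <= Kp)
  (hlip : forall u w, C u -> C w -> Rabs ((j u + eta u) - (j w + eta w)) <= Kp * hnorm (hsub u w))
  a b lam : 0 < a < b -> 0 <= lam ->
  (j (z b) + eta (z b)) + 2 * lam * hnorm (hsub (z b) (z a)) - lam * lam * b <=
  (j (z a) + eta (z a)) + 2 * lam * hnorm (hsub (z a) (z a)) - lam * lam * a.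
Proof.
  intros Hab Hlam. destruct hz as [hcont [hzC [hAC hnull]]].
  set (G := fun t => (j (z t) + eta (z t)) + 2 * lam * hnorm (hsub (z t) (z a)) - lam * lam * t).
  change (G b <= G a).
  assert (Gpieces : forall p q, 0 <= p -> 0 <= q ->
    G q - G p <= (Kp + 2 * lam) * hnorm (hsub (z q) (z p)) - lam * lam * (q - p) /\
    G p - G q <= (Kp + 2 * lam) * hnorm (hsub (z q) (z p)) + lam * lam * (q - p)).
  { intros p q Hp Hq. unfold G.
    assert (L1 := hlip (z q) (z p) (hzC q Hq) (hzC p Hp)). apply rabs_le2 in L1.
    assert (L2 := rev_tri H (z q) (z p) (z a)). apply rabs_le2 in L2.
    set (n := hnorm (hsub (z q) (z p))) in *.
    set (A2 := hnorm (hsub (z q) (z a)) - hnorm (hsub (z p) (z a))) in *.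
    assert (2 * lam * A2 <= 2 * lam * n) by (apply Rmult_le_compat_l; lra).
    assert (- (2 * lam * n) <= 2 * lam * A2) by (replace (- (2 * lam * n)) with (2 * lam * (- n)) by ring; apply Rmult_le_compat_l; lra).
    unfold A2 in *. split; nra. }
  assert (Gcont : forall t, 0 < t -> forall eps, eps > 0 -> ctsat (fun s => G s - eps * s) t).
  { intros t Ht eps Heps e He.
    set (K1 := Kp + 2 * lam + 1). set (K2 := lam * lam + eps + 1).
    assert (K1p : 0 < K1) by (unfold K1; lra). assert (K2p : 0 < K2) by (unfold K2; nra).
    destruct (hcont t ltac:(lra) (e / (2 * K1))) as [dz [Hdz Hz]]; [apply Rdiv_lt_0_compat; lra|].
    exists (Rmin dz (Rmin t (e / (2 * K2)))). split.
    { apply Rmin_pos; [lra| apply Rmin_pos; [lra| apply Rdiv_lt_0_compat; lra]]. }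
    intros y Hy.
    assert (y1 : Rabs (y - t) < dz) by (eapply Rlt_le_trans; [apply Hy| apply Rmin_l]).
    assert (y2 : Rabs (y - t) < t) by (eapply Rlt_le_trans; [apply Hy| eapply Rle_trans; [apply Rmin_r| apply Rmin_l]]).
    assert (y3 : Rabs (y - t) < e / (2 * K2)) by (eapply Rlt_le_trans; [apply Hy| eapply Rle_trans; [apply Rmin_r| apply Rmin_r]]).
    assert (y0 : 0 <= y) by (apply Rabs_def2 in y2; lra).
    specialize (Hz y y0 y1).
    destruct (Gpieces t y ltac:(lra) y0) as [P1 P2].
    set (n := hnorm (hsub (z y) (z t))) in *.
    assert (Nn : 0 <= n) by apply hnorm_nonneg.
    assert (E1 : (Kp + 2 * lam) * n <= K1 * (e / (2 * K1))).
    { apply Rle_trans with (K1 * n). unfold K1; nra. apply Rmult_le_compat_l; lra. }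
    assert (E1s : (Kp + 2 * lam) * n < K1 * (e / (2 * K1))).
    { apply Rle_lt_trans with (K1 * n). unfold K1; nra. apply Rmult_lt_compat_l; lra. }
    assert (E1' : K1 * (e / (2 * K1)) = e / 2) by (field; lra).
    assert (E2 : (lam * lam + eps) * Rabs (y - t) <= K2 * (e / (2 * K2))).
    { apply Rle_trans with (K2 * Rabs (y - t)). unfold K2; pose proof (Rabs_pos (y - t)); nra.
      apply Rmult_le_compat_l; lra. }
    assert (E2' : K2 * (e / (2 * K2)) = e / 2) by (field; lra).
    assert (Hyt := Rle_abs (y - t)). assert (Hty := Rle_abs (- (y - t))). rewrite Rabs_Ropp in Hty.
    assert (lam * lam * (y - t) <= lam * lam * Rabs (y - t)) by (apply Rmult_le_compat_l; nra).
    assert (- (lam * lam * Rabs (y - t)) <= lam * lam * (y - t)).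
    { replace (lam * lam * (y - t)) with (- (lam * lam * (- (y - t)))) by ring.
      apply Ropp_le_contravar. apply Rmult_le_compat_l; nra. }
    assert (eps * (y - t) <= eps * Rabs (y - t)) by (apply Rmult_le_compat_l; lra).
    assert (- (eps * Rabs (y - t)) <= eps * (y - t)).
    { replace (eps * (y - t)) with (- (eps * (- (y - t)))) by ring.
      apply Ropp_le_contravar. apply Rmult_le_compat_l; lra. }
    assert (E2b : lam * lam * Rabs (y - t) + eps * Rabs (y - t) <= e / 2).
    { rewrite <- E2'. replace (lam * lam * Rabs (y - t) + eps * Rabs (y - t)) with ((lam * lam + eps) * Rabs (y - t)) by ring. exact E2. }
    apply Rabs_def1; lra. }
  assert (key : forall eps, eps > 0 -> G b - eps * b <= G a - eps * a).
  { intros eps Heps.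
    apply (mono (fun s => G s - eps * s) (fun t => 0 <= t /\ ~ (exists v, has_derivative_at H z t v /\ S_set H C gj eta (z t) v)) a b).
    - lra.
    - intros t Ht. apply Gcont; lra.
    - exact hnull.
    - intros t Ht Hn. assert (Hv : exists v, has_derivative_at H z t v /\ S_set H C gj eta (z t) v).
      { apply NNPP. intro Hn2. apply Hn. split; [lra| auto]. }
      destruct Hv as [v [Hd HS]].
      set (e' := eps / (2 * (1 + 2 * lam))).
      destruct (descent H C U j gj eta hgrad hCU z hcont hzC t v ltac:(lra) Hd HS e') as [d [Hd0 Hdd]].
      { unfold e'; apply Rdiv_lt_0_compat; lra. }
      exists d. split; auto. intros h Hh. destruct (Hdd h Hh) as [D1 D2].
      assert (Tr := hnorm_sub_tri H (z t) (z (t - h)) (z a)).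
      set (nv := hnorm v) in *.
      assert (E' : e' * (1 + 2 * lam) = eps / 2) by (unfold e'; field; lra).
      assert (Q : 2 * lam * hnorm (hsub (z t) (z a)) <= 2 * lam * hnorm (hsub (z t) (z (t - h))) + 2 * lam * hnorm (hsub (z (t - h)) (z a))) by nra.
      assert (Q2 : 2 * lam * hnorm (hsub (z t) (z (t - h))) <= 2 * lam * (h * (nv + e'))) by (apply Rmult_le_compat_l; lra).
      assert (Q3 : h * (- (nv * nv) + e') + 2 * lam * (h * (nv + e')) - lam * lam * h <= h * (eps / 2)).
      { replace (h * (- (nv * nv) + e') + 2 * lam * (h * (nv + e')) - lam * lam * h)
          with (h * (- ((nv - lam) * (nv - lam)) + e' * (1 + 2 * lam))) by ring.
        rewrite E'. apply Rmult_le_compat_l; [lra|]. pose proof (Rle_0_sqr (nv - lam)); unfold Rsqr in *; lra. }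
      unfold G. nra.
    - apply (AC_incr H (fun s => G s - eps * s) z (Kp + 2 * lam) a b ltac:(lra)).
      + apply hAC; lra.
      + intros p q Hp Hpq Hq. destruct (Gpieces p q ltac:(lra) ltac:(lra)) as [P1 _]. nra. }
  apply Rnot_lt_le. intro Hlt.
  specialize (key ((G b - G a) / (2 * (b - a)))).
  assert (0 < (G b - G a) / (2 * (b - a))) by (apply Rdiv_lt_0_compat; lra).
  specialize (key H0).
  assert ((G b - G a) / (2 * (b - a)) * (b - a) = (G b - G a) / 2) by (field; lra).
  nra.
Qed.


Lemma hscal_zero (H : HilbertSpace) a : hscal a (@hzero H) = hzero.
Proof. apply hself_eq0. rewrite <- hscal_distr_H, hadd_zero. reflexivity. Qed.

Theorem mainTheorem12
  (H : HilbertSpace) (C U : H -> Prop) (L : R)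
  (j : H -> R) (gj : H -> H) (eta Leta : H -> R)
  (hCne : nonempty H C) (hCb : hbounded H C) (hCc : hconvex H C) (hCcl : hclosed H C)
  (hUo : hopen H U) (hUc : hconvex H U) (hCU : forall x, C x -> U x)
  (hj : C11 H U L j gj)
  (heta_cvx : convex_fun H eta) (heta_lsc : lsc H eta)
  (heta_loc : locally_lipschitz H eta) (heta_bb : bounded_below_on H C eta)
  (hLeta_b : bounded_on_bounded H Leta) (hLeta : slope_bound H eta Leta)
  (z : R -> H)
  (hz : strong_solution H C gj eta z)
  (hz0 : ~ S_set H C gj eta (z 0) hzero) :
  let phi := fun u => j u + eta u in
  exists T, T > 0 /\ exists s,
    is_lub (fun y => exists t, 0 <= t <= T /\ y = phi (z t)) s /\
    phi (z T) < s /\ s <= phi (z 0).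
Proof.
  intro phi. destruct hj as [hgrad hlipg].
  destruct hCne as [c0 Cc0]. destruct hCb as [Mc HMc].
  assert (Mc0 : 0 <= Mc) by (specialize (HMc c0 Cc0); pose proof (hnorm_nonneg H c0); lra).
  set (Gm := hnorm (gj c0) + Rabs L * (Mc + Mc)).
  assert (HGm : forall x, C x -> hnorm (gj x) <= Gm).
  { intros x Cx. assert (T1 := hnorm_le_sub H (gj x) (gj c0)).
    assert (T2 := hlipg x c0 (hCU x Cx) (hCU c0 Cc0)).
    assert (T3 := hnorm_sub_le H x c0). assert (T4 := HMc x Cx). assert (T5 := HMc c0 Cc0).
    assert (N0 := hnorm_nonneg H (hsub x c0)).
    assert (L * hnorm (hsub x c0) <= Rabs L * hnorm (hsub x c0)) by (apply Rmult_le_compat_r; [auto| apply Rle_abs]).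
    assert (Rabs L * hnorm (hsub x c0) <= Rabs L * (Mc + Mc)) by (apply Rmult_le_compat_l; [apply Rabs_pos| lra]).
    unfold Gm. lra. }
  destruct (hLeta_b C (ex_intro _ Mc HMc)) as [Me HMe].
  assert (Jl := j_lip H U C j gj hgrad hCU hCc Gm HGm).
  assert (El := eta_lip H C eta Leta hLeta Me HMe).
  set (Kp := Rabs Gm + Rabs Me).
  assert (hKp : 0 <= Kp) by (unfold Kp; pose proof (Rabs_pos Gm); pose proof (Rabs_pos Me); lra).
  assert (hlip : forall u w, C u -> C w -> Rabs ((j u + eta u) - (j w + eta w)) <= Kp * hnorm (hsub u w)).
  { intros u w Cu Cw. specialize (Jl u w Cu Cw). specialize (El u w Cu Cw).
    assert (N0 := hnorm_nonneg H (hsub u w)).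
    assert (Gm * hnorm (hsub u w) <= Rabs Gm * hnorm (hsub u w)) by (apply Rmult_le_compat_r; [auto| apply Rle_abs]).
    assert (Me * hnorm (hsub u w) <= Rabs Me * hnorm (hsub u w)) by (apply Rmult_le_compat_r; [auto| apply Rle_abs]).
    replace (j u + eta u - (j w + eta w)) with ((j u - j w) + (eta u - eta w)) by ring.
    eapply Rle_trans; [apply Rabs_triang|]. unfold Kp. lra. }
  assert (hz' := hz). destruct hz' as [hcont [hzC [hAC hnull]]].
  set (psi := fun t => phi (z t)).
  assert (Fmono : forall a b, 0 < a < b -> psi b <= psi a).
  { intros a b Hab. assert (G := Gmono H C U j gj eta hgrad hCU z hz Kp hKp hlip a b 0 Hab (Rle_refl 0)).
    unfold psi, phi. rewrite hnorm_sub_self in G. lra. }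
  assert (Feq : forall a b, 0 < a < b -> psi b = psi a -> z b = z a).
  { intros a b Hab Heq. apply hnorm_sub_eq0.
    set (n := hnorm (hsub (z b) (z a))). assert (Nn : 0 <= n) by apply hnorm_nonneg.
    destruct Nn as [Np|]; [|auto]. exfalso.
    set (lam := n / (b - a)).
    assert (Hl : 0 < lam) by (apply Rdiv_lt_0_compat; lra).
    assert (G := Gmono H C U j gj eta hgrad hCU z hz Kp hKp hlip a b lam Hab ltac:(lra)).
    rewrite hnorm_sub_self in G. unfold psi, phi in Heq. fold n in G.
    assert (lam * (b - a) = n) by (unfold lam; field; lra).
    nra. }
  assert (Pcont : forall e, e > 0 -> exists d, d > 0 /\ forall s, 0 <= s < d -> Rabs (psi s - psi 0) < e).
  { intros e He. destruct (hcont 0 (Rle_refl 0) (e / (Kp + 1))) as [d [Hd Hdd]]; [apply Rdiv_lt_0_compat; lra|].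
    exists d. split; auto. intros s Hs.
    assert (Hn := Hdd s ltac:(lra) ltac:(rewrite Rminus_0_r, Rabs_right; lra)).
    assert (Hl := hlip (z s) (z 0) (hzC s ltac:(lra)) (hzC 0 (Rle_refl 0))).
    unfold psi, phi. eapply Rle_lt_trans; [exact Hl|].
    assert (N0 := hnorm_nonneg H (hsub (z s) (z 0))).
    apply Rle_lt_trans with ((Kp + 1) * hnorm (hsub (z s) (z 0))); [nra|].
    apply Rmult_lt_compat_l with (r := Kp + 1) in Hn; [|lra].
    replace ((Kp + 1) * (e / (Kp + 1))) with e in Hn by (field; lra). exact Hn. }
  assert (Fle0 : forall t, 0 <= t -> psi t <= psi 0).
  { intros t Ht. destruct (Req_dec t 0) as [->|Htn]; [lra|].
    apply Rnot_lt_le. intro Hgt.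
    destruct (Pcont (psi t - psi 0)) as [d [Hd Hdd]]; [lra|].
    set (s := Rmin d t / 2).
    assert (0 < s < t) by (unfold s, Rmin; destruct Rle_dec; lra).
    assert (s < d) by (unfold s, Rmin; destruct Rle_dec; lra).
    specialize (Hdd s ltac:(lra)). apply Rabs_def2 in Hdd.
    specialize (Fmono s t ltac:(lra)). lra. }
  assert (ExT : exists T, T > 0 /\ psi T < psi 0).
  { apply NNPP. intro Hno.
    assert (Hc : forall t, 0 < t -> psi t = psi 0).
    { intros t Ht. apply Rle_antisym; [apply Fle0; lra|]. apply Rnot_lt_le. intro Hlt. apply Hno. exists t; split; auto. }
    assert (Zc : forall t, 0 < t -> z t = z 0).
    { intros t Ht. apply hnorm_sub_eq0.
      set (n := hnorm (hsub (z t) (z 0))). assert (Nn : 0 <= n) by apply hnorm_nonneg.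
      destruct Nn as [Np|]; [|auto]. exfalso.
      destruct (hcont 0 (Rle_refl 0) n Np) as [d [Hd Hdd]].
      set (s := Rmin d t / 2).
      assert (0 < s < t) by (unfold s, Rmin; destruct Rle_dec; lra).
      assert (s < d) by (unfold s, Rmin; destruct Rle_dec; lra).
      assert (Ezs : z t = z s) by (apply (Feq s t); [lra| rewrite (Hc t), (Hc s) by lra; reflexivity]).
      specialize (Hdd s ltac:(lra) ltac:(rewrite Rminus_0_r, Rabs_right; lra)).
      assert (n = hnorm (hsub (z s) (z 0))) by (unfold n; rewrite Ezs; auto). lra. }
    assert (Good : exists t, 0 < t /\ exists v, has_derivative_at H z t v /\ S_set H C gj eta (z t) v).
    { apply NNPP. intro Hng.
      assert (M := mono (fun x => x) (fun t => 0 <= t /\ ~ (exists v, has_derivative_at H z t v /\ S_set H C gj eta (z t) v)) 1 2).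
      assert (2 <= 1); [|lra]. apply M.
      - lra.
      - intros t _ e He. exists e. split; auto.
      - exact hnull.
      - intros t Ht Hn. exfalso. apply Hn. split; [lra|]. intro Hv. apply Hng. exists t. split; [lra| auto].
      - intros e He. exists e. split; auto. }
    destruct Good as [t [Ht [v [Hd HS]]]].
    assert (v = hzero).
    { apply hnorm_eq0. apply Rle_antisym; [|apply hnorm_nonneg].
      apply Rnot_lt_le. intro Hvp.
      destruct (Hd (hnorm v) Hvp) as [d [Hd0 Hdd]].
      set (h := Rmin d t / 2).
      assert (0 < h < t) by (unfold h, Rmin; destruct Rle_dec; lra).
      assert (h < d) by (unfold h, Rmin; destruct Rle_dec; lra).
      specialize (Hdd h ltac:(lra) ltac:(rewrite Rabs_right; lra)).
      rewrite (Zc (t + h)), (Zc t) in Hdd by lra.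
      unfold hsub at 2 in Hdd. rewrite hadd_opp, hscal_zero in Hdd.
      unfold hnorm in Hdd. rewrite hnorm_sub_inner, !hinner_0l in Hdd.
      replace (0 - 2 * 0 + hinner v v) with (hinner v v) in Hdd by ring. unfold hnorm in Hvp. lra. }
    subst v. rewrite (Zc t Ht) in HS. contradiction. }
  destruct ExT as [T [HT HlT]].
  exists T. split; auto. exists (psi 0). split; [|split; [exact HlT| apply Rle_refl]].
  split.
  - intros y [t [Ht ->]]. apply Fle0. lra.
  - intros b Hb. apply Hb. exists 0. split; [lra| reflexivity].
Qed.
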